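(* Let $(\mathbf{X}_i, Z_i, Y_i)$, $i=1,\dots,n$, be the units of a survey sample, where $\mathbf{X}_i=(X_{i1},\dots,X_{iK})$ is a covariate vector, $Z_i\in\{0,1\}$ is the treatment indicator, and each unit has known sampling probability $p_{Z_i}(\mathbf{X}_i)\in(0,1)$, where $p_z(\mathbf{x}) = P(S=1\mid Z=z,\mathbf{X}=\mathbf{x})$. Suppose the population-level propensity score is estimated by survey-weighted logistic regression with an intercept, i.e. $\widehat{e}_{\text{sp}}(\mathbf{X}_i)=\operatorname{logit}^{-1}(\widehat{\beta}_0+\mathbf{X}_i\widehat{\boldsymbol{\beta}}_{sw}^{\top})$, where $(\widehat{\beta}_0,\widehat{\boldsymbol{\beta}}_{sw})$ is the weighted maximum likelihood estimator using survey weights $1/p_{Z_i}(\mathbf{X}_i)$, i.e. it solves $\sum_{i=1}^n \frac{1}{p_{Z_i}(\mathbf{X}_i)}\big(Z_i-\widehat{e}_{\text{sp}}(\mathbf{X}_i)\big)(1,\mathbf{X}_i)^{\top}=\mathbf{0}$. Then the survey-weighted overlap weights $\big((1-\widehat e_{\text{sp}}(\mathbf{X}_i))/p_1(\mathbf{X}_i)$ for treated units, $\widehat e_{\text{sp}}(\mathbf{X}_i)/p_0(\mathbf{X}_i)$ for control units$\big)$ give exact balance of the weighted means of every covariate: $$\frac{\sum_{i=1}^{n} X_{ik} Z_i (1-\widehat{e}_{\text{sp}}(\mathbf{X}_i))/p_1(\mathbf{X}_i)}{\sum_{i=1}^{n} Z_i (1-\widehat{e}_{\text{sp}}(\mathbf{X}_i))/p_1(\mathbf{X}_i)}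 = \frac{\sum_{i=1}^{n} X_{ik} (1-Z_i)\, \widehat{e}_{\text{sp}}(\mathbf{X}_i)/p_0(\mathbf{X}_i)}{\sum_{i=1}^{n} (1-Z_i)\, \widehat{e}_{\text{sp}}(\mathbf{X}_i)/p_0(\mathbf{X}_i)}, \quad k=1,\dots,K,$$ whenever the denominators are nonzero.
   Context: Setting: a sample of size $n$ is drawn from a superpopulation; $S\in\{0,1\}$ indicates selection into the sample. Treatment $Z$ is assigned before sampling (retrospective design), so sampling probabilities $p_z(\mathbf{x})=P(S=1\mid Z=z,\mathbf{X}=\mathbf{x})$ may depend on treatment and covariates; these are known for sampled units and their inverses are the survey weights. The population-level propensity score is $e_{\text{sp}}(\mathbf{x})=P(Z=1\mid \mathbf{X}=\mathbf{x})$. *)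

(* Defs.v *)
From mathcomp Require Import all_boot all_order all_algebra.
From mathcomp Require Import all_classical all_reals all_analysis.
Set Implicit Arguments. Unset Strict Implicit. Unset Printing Implicit Defensive.
Import Order.TTheory GRing.Theory Num.Theory.
Local Open Scope ring_scope.

Definition invlogit {R : realType} (t : R) : R := (1 + expR (- t))^-1.

Definition ehat {R : realType} (K : nat) (b0 : R) (b : 'rV[R]_K) (x : 'rV[R]_K) : R :=
  invlogit (b0 + \sum_(k < K) x ord0 k * b ord0 k).

Definition pz {R : realType} (K : nat) (p0 p1 : 'rV[R]_K -> R) (z : bool) (x : 'rV[R]_K) : R :=
  if z then p1 x else p0 x.

(* Main.v *)
Require Import Defs.
From mathcomp Require Import all_boot all_order all_algebra.
From mathcomp Require Import all_classical all_reals all_analysis.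
From mathcomp Require Import ring.
Import Order.TTheory GRing.Theory Num.Theory.
Local Open Scope ring_scope.

Theorem proposition1 (R : realType) (n K : nat)
  (X : 'M[R]_(n, K)) (Z : 'I_n -> bool) (p0 p1 : 'rV[R]_K -> R)
  (b0 : R) (b : 'rV[R]_K) :
  (forall i : 'I_n, 0 < pz p0 p1 (Z i) (row i X) < 1) ->
  (* weighted score equation, intercept component *)
  \sum_(i < n) (pz p0 p1 (Z i) (row i X))^-1 * ((Z i)%:R - ehat b0 b (row i X)) = 0 ->
  (* weighted score equations, covariate components *)
  (forall k : 'I_K,
     \sum_(i < n) (pz p0 p1 (Z i) (row i X))^-1 * ((Z i)%:R - ehat b0 b (row i X)) * X i k = 0) ->
  forall k : 'I_K,
    \sum_(i < n) (Z i)%:R * (1 - ehat b0 b (row i X)) / p1 (row i X) != 0 ->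
    \sum_(i < n) (1 - (Z i)%:R) * ehat b0 b (row i X) / p0 (row i X) != 0 ->
    (\sum_(i < n) X i k * (Z i)%:R * (1 - ehat b0 b (row i X)) / p1 (row i X))
      / (\sum_(i < n) (Z i)%:R * (1 - ehat b0 b (row i X)) / p1 (row i X))
    = (\sum_(i < n) X i k * (1 - (Z i)%:R) * ehat b0 b (row i X) / p0 (row i X))
      / (\sum_(i < n) (1 - (Z i)%:R) * ehat b0 b (row i X) / p0 (row i X)).
Proof.
move=> _ H0 Hk k _ _.
set e := fun i : 'I_n => ehat b0 b (row i X).
have key : forall i : 'I_n,
  (Z i)%:R * (1 - e i) / p1 (row i X) - (1 - (Z i)%:R) * e i / p0 (row i X)
  = (pz p0 p1 (Z i) (row i X))^-1 * ((Z i)%:R - e i).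
  by move=> i; rewrite /pz; case: (Z i) => /=; rewrite ?subrr; ring.
have ED : \sum_(i < n) (Z i)%:R * (1 - e i) / p1 (row i X)
        = \sum_(i < n) (1 - (Z i)%:R) * e i / p0 (row i X).
  by apply/eqP; rewrite -subr_eq0 -sumrB (eq_bigr _ (fun i _ => key i)) H0.
have EN : \sum_(i < n) X i k * (Z i)%:R * (1 - e i) / p1 (row i X)
        = \sum_(i < n) X i k * (1 - (Z i)%:R) * e i / p0 (row i X).
  apply/eqP; rewrite -subr_eq0 -sumrB -[X in _ == X](Hk k); apply/eqP.
  apply: eq_bigr => i _.
  by rewrite -[in RHS]key mulrBl; congr (_ - _); rewrite [RHS]mulrC !mulrA.
by rewrite /e in ED EN; rewrite ED EN.
Qed.
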